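(* In the setting described in the context, assume the bounded-flux assumption holds. Then there exist positive constants $C_3$, $C_4$ and $C_5$, independent of $|I|$, $|\bar J_n|$, $|K|$, $T_{\mathrm{renorm}}$ and $M$, such that if $T_{\mathrm{renorm}}\ge C_3$, then for every $j\in\bar J_n$, $k\in K$ and $m\in[M]$, \[ \left| w^{j\to k}(T^2_m)-\bar w^{j\to k}_{m+1}\right|\le C_4\,e^{-C_5|\bar J_n|T_{\mathrm{renorm}}}. \] Therefore $w^{j\to k}(T^2_m)\to\bar w^{j\to k}_{m+1}$ as $T_{\mathrm{renorm}}\to\infty$.
   Context: Deterministic mass-action chemical reaction network. Let $I$ and $K$ be finite sets with $|K|\ge2$, $n\in\{1,\dots,|I|\}$, $J_n$ the set of $n$-element subsets of $I$. Input concentrations $x^i\ge0$, $i\in I$, are prescribed functions of time; flux $\Phi^j(t):=\prod_{i\in j}x^i(t)$. Positive constants: $a_0,a_1,a_2,b_1,b_2,s_0,h_0,\eta,\theta,\rho$, durations $T_{\mathrm{sel}},T_{\mathrm{renorm}},T_{\mathrm{learn}}$; $M\ge1$; $[M]=\{1,\dots,M\}$. Selection phase: $x^i$ continuous on $[0,T_{\mathrm{sel}}]$; $f:[0,\infty)\to[0,\infty)$ continuous, $f\equiv0$ on $[0,\theta]$, increasing on $(\theta,\theta+\rho)$, $f\equiv\|f\|_\infty$ on $[\theta+\rho,\infty)$. $\bar J_n$ (assumed nonempty) is the set of $j\in J_n$ such that $\Phi^j>\theta$ on some $[t_0,t_1]\subset[0,T_{\mathrm{sel}}]$ with $t_0<t_1$.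 $T^0_1:=T_{\mathrm{sel}}+T_{\mathrm{renorm}}$. For $j\in\bar J_n$: $w^j(0)=0$, $\dot w^j=f(\Phi^j)$ on $[0,T_{\mathrm{sel}}]$, $\dot w^j=a_0(b_1-b_2w^j)$ on $[T_{\mathrm{sel}},T^0_1]$, and $w^j$ is constant afterwards. Write $x^j(t):=w^j(T^0_1)\Phi^j(t)$ for $t\ge T^0_1$. Learning phase: times $T^0_m<T^1_m<T^2_m=T^0_{m+1}$ ($m\in[M]$), $T^1_m-T^0_m=T_{\mathrm{learn}}$, $T^2_m-T^1_m=T_{\mathrm{renorm}}$; $x^i$ continuous on each $[T^0_m,T^1_m]$. Training sample $o_m$ has true class $k^\star_m\in K$ (write $o_m\in k$ iff $k^\star_m=k$); $M^k:=\#\{m:o_m\in k\}>0$; $d_k:=\eta M/M^k$, $c_k:=\eta M/(M^k(|K|-1))$. State variables $x^k$ ($k\in K$), $h^{j\to k},w^{j\to k}$ ($j\in\bar J_n$, $k\in K$) with $x^k(T^0_1)=0$, $h^{j\to k}(T^0_1)=h_0$, $w^{j\to k}(T^0_1)=\frac{b_1}{b_2|\bar J_n|}$. On $[T^0_m,T^1_m]$: $w^{j\to k}$ constant, $\dot x^k=a_1\sum_{j\in\bar J_n}x^j(t)w^{j\to k}(T^0_m)$, $\dot h^{j\to k^\star_m}=d_{k^\star_m}(x^j(t)+s_0)h^{j\to k^\star_m}$, and for $k\ne k^\star_m$, $\dot h^{j\to k}=c_k(s_0-x^j(t))h^{j\to k}$. On $[T^1_m,T^2_m]$: $h^{j\to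 k}$ constant, $\dot x^k=-a_2x^k$, $\dot w^{j\to k}=b_1h^{j\to k}(T^1_m)-b_2w^{j\to k}\sum_{j'\in\bar J_n}h^{j'\to k}(T^1_m)$. Gains: $g^{j\to k}_m:=\big(w^j(T^0_1)\int_{T^0_m}^{T^1_m}\Phi^j+s_0T_{\mathrm{learn}}\big)\frac{M}{M^k}$ if $o_m\in k$, and $g^{j\to k}_m:=\big(-w^j(T^0_1)\int_{T^0_m}^{T^1_m}\Phi^j+s_0T_{\mathrm{learn}}\big)\frac{M}{M^{k'}}\frac{1}{|K|-1}$ if $o_m\in k'\ne k$; $G^{j\to k}_m:=\sum_{m'=1}^m g^{j\to k}_{m'}$. EWA weights: $\bar w^{j\to k}_1:=\frac{b_1}{b_2|\bar J_n|}$ and $\bar w^{j\to k}_{m+1}:=\frac{b_1}{b_2}\frac{\exp(\eta G^{j\to k}_m)}{\sum_{j'\in\bar J_n}\exp(\eta G^{j'\to k}_m)}$ for $m\ge1$. Bounded-flux assumption: there is $\alpha>0$ independent of $M$ with $\sup_{j\in\bar J_n,\,t\in[T^0_1,T^2_M]}\Phi^j(t)\le\alpha$, and $\delta:=s_0-2\frac{b_1}{b_2}\alpha>0$. *)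

(* Defs.v *)
From HB Require Import structures.
From mathcomp Require Import all_boot all_order all_algebra.
From mathcomp Require Import all_classical all_reals all_analysis.
Set Implicit Arguments. Unset Strict Implicit. Unset Printing Implicit Defensive.
Import Order.TTheory GRing.Theory Num.Theory.
Import numFieldNormedType.Exports.
Local Open Scope classical_set_scope.
Local Open Scope ring_scope.

Section CRN.
Context {R : realType} {I K : finType}.

Definition Phi (x : I -> R -> R) (j : {set I}) (t : R) : R := \prod_(i in j) x i t.

Definition Jbar (x : I -> R -> R) (n : nat) (theta Tsel : R) : {set {set I}} :=
  [set j : {set I} | (#|j| == n) &&
     `[< exists t0 t1 : R, [/\ 0 <= t0, t0 < t1, t1 <= Tsel &
            forall t, t0 <= t <= t1 -> theta < Phi x j t] >]].

(* phase times, for m >= 1 *)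
Definition T0 (Tsel Tlearn Tren : R) (m : nat) : R :=
  Tsel + Tren + (m.-1)%:R * (Tlearn + Tren).
Definition T1 (Tsel Tlearn Tren : R) (m : nat) : R := T0 Tsel Tlearn Tren m + Tlearn.
Definition T2 (Tsel Tlearn Tren : R) (m : nat) : R := T1 Tsel Tlearn Tren m + Tren.

(* M^k = #{ m in [M] : o_m in k } ; kstar m is the true class of sample o_m *)
Definition class_count (kstar : nat -> K) (M : nat) (k : K) : nat :=
  (\sum_(1 <= m < M.+1) (kstar m == k))%N.

Definition drate (eta : R) (kstar : nat -> K) (M : nat) (k : K) : R :=
  eta * M%:R / (class_count kstar M k)%:R.
Definition crate (eta : R) (kstar : nat -> K) (M : nat) (k : K) : R :=
  eta * M%:R / ((class_count kstar M k)%:R * (#|K|.-1)%:R).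

(* gain g^{j->k}_m ; wsel j is the selection-phase weight w^j(.) *)
Definition gain (x : I -> R -> R) (wsel : {set I} -> R -> R) (s0 Tsel Tlearn Tren : R)
    (kstar : nat -> K) (M : nat) (m : nat) (j : {set I}) (k : K) : R :=
  let W := wsel j (T0 Tsel Tlearn Tren 1) in
  let In := \int[lebesgue_measure]_(t in `[T0 Tsel Tlearn Tren m, T1 Tsel Tlearn Tren m])
              Phi x j t in
  if kstar m == k then
    (W * In + s0 * Tlearn) * (M%:R / (class_count kstar M k)%:R)
  else
    (- (W * In) + s0 * Tlearn) * (M%:R / (class_count kstar M (kstar m))%:R)
      * ((#|K|.-1)%:R)^-1.

Definition cgain (x : I -> R -> R) (wsel : {set I} -> R -> R) (s0 Tsel Tlearn Tren : R)
    (kstar : nat -> K) (M : nat) (m : nat) (j : {set I}) (k : K) : R :=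
  \sum_(1 <= m' < m.+1) gain x wsel s0 Tsel Tlearn Tren kstar M m' j k.

Definition ewa (x : I -> R -> R) (wsel : {set I} -> R -> R) (Jb : {set {set I}})
    (b1 b2 eta s0 Tsel Tlearn Tren : R) (kstar : nat -> K) (M : nat)
    (m : nat) (j : {set I}) (k : K) : R :=
  if (m <= 1)%N then b1 / (b2 * #|Jb|%:R)
  else b1 / b2 * (expR (eta * cgain x wsel s0 Tsel Tlearn Tren kstar M m.-1 j k)
         / \sum_(j' in Jb) expR (eta * cgain x wsel s0 Tsel Tlearn Tren kstar M m.-1 j' k)).

End CRN.

(* Main.v *)
Require Import Defs.
From HB Require Import structures.
From mathcomp Require Import all_boot all_order all_algebra.
From mathcomp Require Import all_classical all_reals all_analysis.
From mathcomp Require Import ring lra.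
Import Order.TTheory GRing.Theory Num.Theory.
Import numFieldNormedType.Exports.
Local Open Scope classical_set_scope.
Local Open Scope ring_scope.

Section Aux.
Context {R : realType}.

Lemma ode_exp (h g dg : R -> R) a b : a < b ->
  {within `[a,b], continuous h} -> {within `[a,b], continuous g} ->
  (forall t, a < t < b -> is_derive t 1 g (dg t)) ->
  (forall t, a < t < b -> is_derive t 1 h (dg t * h t)) ->
  h b = h a * expR (g b - g a).
Proof.
move=> ab hc gc gd hd.
pose u := fun t => h t * expR (- g t).
have := @MVT R u (fun _ => 0) a b ab.
case.
- move=> t; rewrite in_itv /= => tab.
  have e1 : is_derive t 1 (expR \o (fun x => - g x)) (expR (- g t) * (- dg t)).
    apply: is_derive1_comp; apply: is_deriveN; exact: gd.
  have H := is_deriveM (hd t tab) e1.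
  apply: (is_derive_eq H).
  by rewrite /GRing.scale /=; ring.
- move=> x; rewrite /u /from_subspace.

  apply: (@continuousM R (subspace `[a,b]) h (expR \o (fun y => - g y)) x); first exact: hc.
  apply: continuous_comp; last exact: continuous_expR.
  by apply: continuousN; exact: gc.
move=> c _; rewrite mul0r => /eqP; rewrite subr_eq0 /u => /eqP E.
have : h b = h b * expR (- g b) * expR (g b) by rewrite -mulrA -expRD addNr expR0 mulr1.
rewrite E -mulrA -expRD => ->; congr (_ * expR _); ring.
Qed.


Lemma itv_cc_sub (a b c d : R) : a <= c -> d <= b -> `[c, d] `<=` `[a, b].
Proof.
move=> ac db t; rewrite /= !in_itv /= => /andP[ct td]; apply/andP; split.
  exact: le_trans ac ct.
exact: le_trans td db.
Qed.

Lemma within_sub (f : R -> R) a b c d : a <= c -> d <= b ->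
  {within `[a,b], continuous f} -> {within `[c,d], continuous f}.
Proof. move=> ac db; apply: continuous_subspaceW; exact: itv_cc_sub. Qed.

Lemma prod_cont {T : topologicalType} {I : finType} (x : I -> T -> R)
  (j : {set I}) t : (forall i, {for t, continuous (x i)}) ->
  {for t, continuous (fun u => \prod_(i in j) x i u)}.
Proof.
move=> hx.
suff: forall s, {for t, continuous (fun u => \prod_(i <- s | i \in j) x i u)}.
  by apply.
elim=> [|i s IH].
  have -> : (fun u => \prod_(i <- [::] | i \in j) x i u) = fun=> 1.
    by apply: funext => u; rewrite big_nil.
  exact: cst_continuous.
have -> : (fun u => \prod_(i0 <- i :: s | i0 \in j) x i0 u) =
  fun u => if i \in j then x i u * \prod_(i0 <- s | i0 \in j) x i0 u
           else \prod_(i0 <- s | i0 \in j) x i0 u.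
  by apply: funext => u; rewrite big_cons.
case: (i \in j) => //.
exact: (@continuousM R T _ _ t (hx i) IH).
Qed.

Lemma Phi_within {I : finType} (x : I -> R -> R) (j : {set I}) (A : set R) :
  (forall i, {within A, continuous (x i)}) -> {within A, continuous (Phi x j)}.
Proof.
move=> hx t.
exact: (@prod_cont (subspace A) I (fun i => from_subspace A (x i)) j t (fun i => hx i t)).
Qed.

Lemma Phi_at {I : finType} (x : I -> R -> R) (j : {set I}) t :
  (forall i, {for t, continuous (x i)}) -> {for t, continuous (Phi x j)}.
Proof. move=> hx; exact: (@prod_cont R I x j t hx). Qed.

Lemma Phi_ge0 {I : finType} (x : I -> R -> R) (j : {set I}) t :
  (forall i, 0 <= x i t) -> 0 <= Phi x j t.
Proof. by move=> hx; rewrite /Phi; apply: prodr_ge0 => i _. Qed.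

Lemma deriv_aff (P : R -> R) (p c1 c2 t : R) : is_derive t 1 P p ->
  is_derive t 1 (fun u => c1 * P u + c2 * u) (c1 * p + c2).
Proof.
move=> hP.
have H := is_deriveD (is_deriveZ c1 hP) (is_deriveZ c2 (@is_derive_id _ _ t 1)).
have -> : (fun u => c1 * P u + c2 * u) = (c1 *: P + c2 *: id).
  by apply: funext => u.
apply: (is_derive_eq H).
by rewrite /GRing.scale /= mulr1.
Qed.

Lemma cont_aff (P : R -> R) (c1 c2 : R) (A : set R) : {within A, continuous P} ->
  {within A, continuous (fun u => c1 * P u + c2 * u)}.
Proof.
move=> hP t.
apply: (@continuousD R R^o (subspace A) (fun u : subspace A => c1 * P u) (fun u : subspace A => c2 * u) t).
  apply: (@continuousM R (subspace A) (fun=> c1) (from_subspace A P) t).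
    exact: cst_continuous.
  exact: hP.
apply: (@continuousM R (subspace A) (fun=> c2) (from_subspace A id) t).
  exact: cst_continuous.
by apply: continuous_subspaceT => z.
Qed.


Lemma learn_step (Phi0 hh : R -> R) (a b r c1 s0 : R) : a < b ->
  {within `[a,b], continuous Phi0} -> {within `[a,b], continuous hh} ->
  (forall t, a < t < b -> is_derive t 1 hh (r * (c1 * Phi0 t + s0) * hh t)) ->
  hh b = hh a * expR (r * (c1 * (\int[lebesgue_measure]_(t in `[a, b]) Phi0 t)
                           + s0 * (b - a))).
Proof.
move=> ab cP ch dh.
pose P := fun t => \int[lebesgue_measure]_(u in `[a, t]) Phi0 u.
have iP : lebesgue_measure.-integrable `[a, b] (EFin \o Phi0).
  by apply: continuous_compact_integrable => //; exact: segment_compact.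
have [cPoo _ _] := (continuous_within_itvP Phi0 ab).1 cP.
have dP : forall t, a < t < b -> is_derive t 1 P (Phi0 t).
  move=> t /andP[ha tb].
  have [H1 H2] := @continuous_FTC1_closed R Phi0 a t b tb iP ha
     (cPoo t ltac:(by rewrite in_itv /= ha tb)).
  by apply: DeriveDef => //; rewrite -derive1E.
have cPP : {within `[a,b], continuous P}.
  exact: (@parameterized_integral_continuous R a b Phi0 (ltW ab) iP).
have dg : forall t, a < t < b -> is_derive t 1
    (fun u => (r * c1) * P u + (r * s0) * u) (r * (c1 * Phi0 t + s0)).
  move=> t tab; apply: (is_derive_eq (@deriv_aff P (Phi0 t) (r * c1) (r * s0) t (dP t tab))); ring.
rewrite (@ode_exp hh (fun u => (r * c1) * P u + (r * s0) * u)
   (fun t => r * (c1 * Phi0 t + s0)) a b ab ch (@cont_aff P (r * c1) (r * s0) _ cPP) dg dh).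
congr (_ * expR _).
have -> : P a = 0 by rewrite /P set_itv1 Rintegral_set1.
rewrite /P; ring.
Qed.


Lemma renorm_step (ww : R -> R) (a b c A : R) : a < b ->
  {within `[a,b], continuous ww} ->
  (forall t, a < t < b -> is_derive t 1 ww (c * (A - ww t))) ->
  ww b - A = (ww a - A) * expR (- c * (b - a)).
Proof.
move=> ab cw dw.
have cid : {within `[a,b], continuous (@id R)} by apply: continuous_subspaceT => z.
have ch : {within `[a,b], continuous (fun t => ww t - A)}.
  move=> t; apply: (@continuousB R R^o (subspace `[a,b]) (from_subspace `[a,b] ww)
    (fun=> A) t); [exact: cw | exact: cst_continuous].
have dg : forall t, a < t < b -> is_derive t 1
    (fun u => (- c) * id u + 0 * u) ((- c) * 1 + 0).
  move=> t _; exact: (@deriv_aff id 1 (- c) 0 t (@is_derive_id _ _ t 1)).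
have dh : forall t, a < t < b -> is_derive t 1 (fun t => ww t - A)
    (((- c) * 1 + 0) * (ww t - A)).
  move=> t tab.
  have H := is_deriveB (dw t tab) (@is_derive_cst _ _ _ A t 1).
  apply: (is_derive_eq H); rewrite /=; ring.
rewrite (@ode_exp (fun t => ww t - A) (fun u => (- c) * id u + 0 * u)
   (fun _ => (- c) * 1 + 0) a b ab ch (@cont_aff id (- c) 0 _ cid) dg dh).
congr (_ * expR _); rewrite /=; ring.
Qed.


Lemma int_bounds (Phi0 : R -> R) (a b al : R) : a <= b ->
  {within `[a,b], continuous Phi0} ->
  (forall t, a <= t <= b -> 0 <= Phi0 t <= al) ->
  0 <= \int[lebesgue_measure]_(t in `[a, b]) Phi0 t <= al * (b - a).
Proof.
move=> ab cP hP; apply/andP; split.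
  apply: Rintegral_ge0 => t; rewrite /= in_itv /= => /hP /andP[] //.
have iP : lebesgue_measure.-integrable `[a, b] (EFin \o Phi0).
  by apply: continuous_compact_integrable => //; exact: segment_compact.
have iC : lebesgue_measure.-integrable `[a, b] (EFin \o (fun=> al)).
  apply: continuous_compact_integrable => //; first exact: segment_compact.
  by apply: continuous_subspaceT => z; exact: cst_continuous.
apply: (le_trans (@le_Rintegral _ _ R lebesgue_measure _ Phi0 (fun=> al) _ iP iC _)).
- by [].
- by move=> t; rewrite /= in_itv /= => /hP /andP[].
rewrite Rintegral_cst //= lebesgue_measure_itv /= lte_fin.
case: ifP => _; first by rewrite -EFinD.
have al0 : 0 <= al.
  by have /andP[h1 h2] := hP a (ltac:(by rewrite lexx ab)); exact: le_trans h1 h2.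
rewrite /= mulr0; apply: mulr_ge0 => //; by rewrite subr_ge0.
Qed.


Lemma f_bound (f : R -> R) (theta rho : R) : 0 < theta -> 0 < rho ->
  {within `[0, +oo[, continuous f} ->
  (forall t, theta + rho <= t -> f t = f (theta + rho)) ->
  (forall t, 0 <= t -> 0 <= f t) ->
  exists Fm, 0 <= Fm /\ forall t, 0 <= t -> f t <= Fm.
Proof.
move=> hth hrho fc fconst f0.
have tr0 : 0 <= theta + rho by apply: addr_ge0; apply: ltW.
have fc' : {within `[0, theta + rho], continuous f}.
  apply: (continuous_subspaceW _ fc) => t; rewrite /= !in_itv /= => /andP[-> _] //.
have [c] := EVT_max tr0 fc'.
rewrite in_itv /= => /andP[c0 c1] hc.
exists (f c); split; first exact: f0.
move=> t t0; have [tl|tg] := leP t (theta + rho).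
  by apply: hc; rewrite in_itv /= t0 tl.
rewrite fconst; last exact: ltW.
by apply: hc; rewrite in_itv /= tr0 lexx.
Qed.


Lemma W_arith (q ws W e FT : R) : 0 < q -> 0 <= ws <= FT -> 0 < e <= 1 ->
  e * FT <= q -> W - q = (ws - q) * e -> 0 <= W <= 2 * q.
Proof.
move=> hq /andP[ws0 ws1] /andP[e0 e1] eF E.
have h1 : ws * e <= FT * e by apply: ler_wpM2r => //; apply: ltW.
have h2 : 0 <= ws * e by apply: mulr_ge0 => //; apply: ltW.
have h3 : q * e <= q by rewrite ger_pMr.
apply/andP; split; nra.
Qed.

Lemma e_arith (a0 b1 b2 FT Tren : R) : 0 < a0 -> 0 < b1 -> 0 < b2 -> 0 <= FT ->
  (FT + 1) / (a0 * b1) <= Tren -> expR (- (a0 * b2) * Tren) * FT <= b1 / b2.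
Proof.
move=> ha hb1 hb2 hF hT.
have hab : 0 < a0 * b1 by apply: mulr_gt0.
rewrite ler_pdivrMr // in hT.
have hx := expR_ge1Dx (a0 * b2 * Tren).
rewrite mulNr expRN -ler_pdivlMl ?invr_gt0 ?expR_gt0 // invrK.
have E : b1 / b2 * (1 + a0 * b2 * Tren) = b1 / b2 + a0 * b1 * Tren.
  by field; rewrite gt_eqF.
have hq : 0 < b1 / b2 by apply: divr_gt0.
have : b1 / b2 * (1 + a0 * b2 * Tren) <= b1 / b2 * expR (a0 * b2 * Tren).
  by apply: ler_wpM2l => //; apply: ltW.
rewrite E mulrC; move: (b1 / b2 * expR (a0 * b2 * Tren)) => Y.
nra.
Qed.


Lemma gain_arith (W In q al Tl s0 : R) : 0 <= W <= 2 * q -> 0 <= In <= al * Tl ->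
  0 < Tl -> 0 < s0 - 2 * q * al -> 0 <= - (W * In) + s0 * Tl.
Proof.
move=> /andP[W0 W1] /andP[I0 I1] hT hd.
have h1 : W * In <= 2 * q * In by apply: ler_wpM2r.
have h2 : 2 * q * In <= 2 * q * (al * Tl).
  apply: ler_wpM2l => //; exact: le_trans W0 W1.
nra.
Qed.


Lemma conv_arith (q A w0 w2 e : R) : 0 <= A <= q -> 0 <= w0 <= q -> 0 < e <= 1 ->
  w2 - A = (w0 - A) * e -> 0 <= w2 <= q.
Proof.
move=> /andP[A0 A1] /andP[w00 w01] /andP[e0 e1] E.
have -> : w2 = A * (1 - e) + w0 * e by rewrite -[w2](subrK A) E; ring.
have h1 : 0 <= A * (1 - e) by apply: mulr_ge0; rewrite // subr_ge0.
have h2 : 0 <= w0 * e by apply: mulr_ge0 => //; apply: ltW.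
have h3 : A * (1 - e) <= q * (1 - e) by apply: ler_wpM2r; rewrite // subr_ge0.
have h4 : w0 * e <= q * e by apply: ler_wpM2r => //; apply: ltW.
apply/andP; split; [exact: addr_ge0 | nra].
Qed.

Lemma final_arith (q A w0 w2 e e' : R) : 0 <= A <= q -> 0 <= w0 <= q ->
  0 < e <= e' -> w2 - A = (w0 - A) * e -> `|w2 - A| <= q * e'.
Proof.
move=> /andP[A0 A1] /andP[w00 w01] /andP[e0 e1] E.
rewrite E normrM (gtr0_norm e0).
have hn : `|w0 - A| <= q.
  rewrite ler_norml; apply/andP; split; lra.
apply: ler_pM => //; exact: ltW.
Qed.

Lemma exp_cmp (b2 h0 N S T : R) : 0 < b2 -> 0 <= T -> h0 * N <= S ->
  expR (- (b2 * S) * T) <= expR (- (b2 * h0) * N * T).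
Proof.
move=> hb hT hS; rewrite ler_expR.
have : b2 * T * (h0 * N) <= b2 * T * S.
  by apply: ler_wpM2l => //; apply: mulr_ge0 => //; apply: ltW.
nra.
Qed.


Lemma div_le (q N : R) : 0 < q -> 1 <= N -> 0 <= q / N <= q.
Proof.
move=> hq hN; have N0 : 0 < N := lt_le_trans ltr01 hN.
apply/andP; split; first by apply: divr_ge0; apply: ltW.
by rewrite ler_pdivrMr // ler_peMr // ltW.
Qed.

End Aux.

Theorem proposition9 (R : realType)
  (a0 a1 a2 b1 b2 s0 h0 eta theta rho Tsel Tlearn alpha : R) (f : R -> R) :
  0 < a0 -> 0 < a1 -> 0 < a2 -> 0 < b1 -> 0 < b2 -> 0 < s0 -> 0 < h0 ->
  0 < eta -> 0 < theta -> 0 < rho -> 0 < Tsel -> 0 < Tlearn -> 0 < alpha ->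
  (* delta := s0 - 2 (b1/b2) alpha > 0 *)
  0 < s0 - 2 * (b1 / b2) * alpha ->
  (* f : [0,oo) -> [0,oo) continuous, 0 on [0,theta], increasing on
     (theta, theta+rho), constant (= its sup norm) on [theta+rho, oo) *)
  {within `[0, +oo[, continuous f} ->
  (forall t, 0 <= t -> 0 <= f t) ->
  (forall t, 0 <= t <= theta -> f t = 0) ->
  {in `]theta, theta + rho[ &, {homo f : s t / s < t}} ->
  (forall t, theta + rho <= t -> f t = f (theta + rho)) ->
  exists C3 C4 C5 : R, [/\ 0 < C3, 0 < C4, 0 < C5 &
  forall (I K : finType) (n M : nat) (Tren : R) (x : I -> R -> R) (kstar : nat -> K)
    (wsel : {set I} -> R -> R) (xk : K -> R -> R) (h w : {set I} -> K -> R -> R),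
  let Jb := Jbar x n theta Tsel in
  let tau0 := T0 Tsel Tlearn Tren in
  let tau1 := T1 Tsel Tlearn Tren in
  let tau2 := T2 Tsel Tlearn Tren in
  let xj := fun (j : {set I}) (t : R) => wsel j (tau0 1%N) * Phi x j t in
  (2 <= #|K|)%N -> (1 <= n <= #|I|)%N -> (1 <= M)%N -> 0 < Tren ->
  (* inputs *)
  (forall i t, 0 <= t -> 0 <= x i t) ->
  (forall i, {within `[0, Tsel], continuous (x i)}) ->
  (forall i m, (1 <= m <= M)%N -> {within `[tau0 m, tau1 m], continuous (x i)}) ->
  (* every class occurs among the samples *)
  (forall k, (0 < class_count kstar M k)%N) ->
  (0 < #|Jb|)%N ->
  (* bounded-flux assumption *)
  (forall j t, j \in Jb -> tau0 1%N <= t <= tau2 M -> Phi x j t <= alpha) ->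
  (* selection + renormalisation phase for w^j *)
  (forall j, j \in Jb ->
     [/\ wsel j 0 = 0,
         {within `[0, tau0 1%N], continuous (wsel j)},
         (forall t, 0 < t < Tsel -> is_derive t 1 (wsel j) (f (Phi x j t))),
         (forall t, Tsel < t < tau0 1%N ->
            is_derive t 1 (wsel j) (a0 * (b1 - b2 * wsel j t))) &
         (forall t, tau0 1%N <= t -> wsel j t = wsel j (tau0 1%N))]) ->
  (* learning phase: initial values and continuity *)
  (forall k, xk k (tau0 1%N) = 0) ->
  (forall k, {within `[tau0 1%N, tau2 M], continuous (xk k)}) ->
  (forall j k, j \in Jb ->
     [/\ h j k (tau0 1%N) = h0, w j k (tau0 1%N) = b1 / (b2 * #|Jb|%:R),
         {within `[tau0 1%N, tau2 M], continuous (h j k)} &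
         {within `[tau0 1%N, tau2 M], continuous (w j k)}]) ->
  (* learning sub-phase [tau0 m, tau1 m] *)
  (forall m, (1 <= m <= M)%N ->
     [/\ (forall j k t, j \in Jb -> tau0 m <= t <= tau1 m -> w j k t = w j k (tau0 m)),
         (forall k t, tau0 m < t < tau1 m ->
            is_derive t 1 (xk k) (a1 * \sum_(j in Jb) xj j t * w j k (tau0 m))),
         (forall j t, j \in Jb -> tau0 m < t < tau1 m ->
            is_derive t 1 (h j (kstar m))
              (drate eta kstar M (kstar m) * (xj j t + s0) * h j (kstar m) t)) &
         (forall j k t, j \in Jb -> k != kstar m -> tau0 m < t < tau1 m ->
            is_derive t 1 (h j k)
              (crate eta kstar M (kstar m) * (s0 - xj j t) * h j k t))]) ->
  (* renormalisation sub-phase [tau1 m, tau2 m] *)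
  (forall m, (1 <= m <= M)%N ->
     [/\ (forall j k t, j \in Jb -> tau1 m <= t <= tau2 m -> h j k t = h j k (tau1 m)),
         (forall k t, tau1 m < t < tau2 m -> is_derive t 1 (xk k) (- a2 * xk k t)) &
         (forall j k t, j \in Jb -> tau1 m < t < tau2 m ->
            is_derive t 1 (w j k)
              (b1 * h j k (tau1 m) - b2 * w j k t * \sum_(j' in Jb) h j' k (tau1 m)))]) ->
  C3 <= Tren ->
  forall j k m, j \in Jb -> (1 <= m <= M)%N ->
    `| w j k (tau2 m) - ewa x wsel Jb b1 b2 eta s0 Tsel Tlearn Tren kstar M m.+1 j k |
      <= C4 * expR (- C5 * #|Jb|%:R * Tren)].

Proof.
move=> ha0 ha1 ha2 hb1 hb2 hs0 hh0 heta hth hrho hTsel hTl hal hdelta fc f0 fz finc fconst.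
have [Fm [Fm0 hFm]] := @f_bound R f theta rho hth hrho fc fconst f0.
have hC3 : 0 < (Fm * Tsel + 1) / (a0 * b1).
  by apply: divr_gt0; [apply: ltr_wpDl => //; apply: mulr_ge0 => //; apply: ltW | apply: mulr_gt0].
exists ((Fm * Tsel + 1) / (a0 * b1)), (b1 / b2), (b2 * h0).
split => //; [exact: divr_gt0 | exact: mulr_gt0 |].
move=> I K n M Tren x kstar wsel xk h w Jb tau0 tau1 tau2 xj hK hn hM hTren hx0 hxc hxcm
  hcc hJb hflux hwsel hxk0 hxkc hinit hlearn hren hTC3 j k m hj hm.
pose q := b1 / b2.
have hq : 0 < q by apply: divr_gt0.
have b1q : b1 = q * b2 by rewrite /q divfK // gt_eqF.
have t01 : tau0 1%N = Tsel + Tren by rewrite /tau0 /T0 /= mul0r addr0.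
have t1E : forall m, tau1 m = tau0 m + Tlearn by [].
have t2E : forall m, tau2 m = tau1 m + Tren by [].
have t0S : forall m, (1 <= m)%N -> tau0 m.+1 = tau2 m.
  case=> [//|m'] _; rewrite /tau2 /tau1 /tau0 /T2 /T1 /T0 /= -[m'.+1%:R]natr1; ring.
have hTLR : 0 <= Tlearn + Tren by apply: addr_ge0; apply: ltW.
have t0mono : forall m, (1 <= m)%N -> tau0 1%N <= tau0 m.
  move=> m' hm'; rewrite t01 /tau0 /T0 lerDl; exact: mulr_ge0.
have t0le : forall m m', (m <= m')%N -> tau0 m <= tau0 m'.
  move=> m1 m2 hm12; rewrite /tau0 /T0 lerD2l.
  apply: ler_wpM2r => //; rewrite ler_nat -!subn1; exact: leq_sub2r.
have t1mono : forall m, (m <= M)%N -> tau1 m <= tau2 M.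
  move=> m' hm'; rewrite /tau2 /tau1 /tau0 /T2 /T1 /T0.
  have hle : (m'.-1%:R : R) <= M.-1%:R by rewrite ler_nat -!subn1 leq_sub2r.
  have := ler_wpM2r hTLR hle.
  move: (m'.-1%:R * (Tlearn + Tren)) (M.-1%:R * (Tlearn + Tren)) => u v huv.
  lra.
have eT : expR (- (a0 * b2) * Tren) * (Fm * Tsel) <= b1 / b2.
  exact: (@e_arith R a0 b1 b2 (Fm * Tsel) Tren ha0 hb1 hb2 (mulr_ge0 Fm0 (ltW hTsel)) hTC3).
have Wb : forall j, j \in Jb -> 0 <= wsel j (tau0 1%N) <= 2 * q.
  move=> j0 hj0.
  have [w00 wc wd wr wconst] := hwsel j0 hj0.
  have Tsl : Tsel < tau0 1%N by rewrite t01 ltrDl.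
  have [c cin hc] := @MVT R (wsel j0) (fun t => f (Phi x j0 t)) 0 Tsel hTsel
    (fun t tin => wd t (ltac:(by move: tin; rewrite in_itv)))
    (@within_sub R (wsel j0) 0 (tau0 1%N) 0 Tsel (lexx 0) (ltW Tsl) wc).
  have c0 : 0 <= c by move: cin; rewrite in_itv /= => /andP[/ltW].
  have P0 : 0 <= Phi x j0 c by apply: Phi_ge0 => i; exact: hx0.
  have ws0 : 0 <= wsel j0 Tsel <= Fm * Tsel.
    rewrite w00 subr0 subr0 in hc; rewrite hc; apply/andP; split.
      by apply: mulr_ge0; [exact: f0 | exact: ltW].
    by apply: ler_wpM2r; [exact: ltW | exact: hFm].
  have dw : forall t, Tsel < t < tau0 1%N ->
      is_derive t 1 (wsel j0) (a0 * b2 * (q - wsel j0 t)).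
    move=> t tin; apply: (is_derive_eq (wr t tin)).
    rewrite b1q; ring.
  have E := @renorm_step R (wsel j0) Tsel (tau0 1%N) (a0 * b2) q Tsl
    (@within_sub R (wsel j0) 0 (tau0 1%N) Tsel (tau0 1%N) (ltW hTsel) (lexx _) wc) dw.
  have eTr : tau0 1%N - Tsel = Tren by rewrite t01; ring.
  rewrite eTr in E.
  apply: (@W_arith R q (wsel j0 Tsel) _ (expR (- (a0 * b2) * Tren)) (Fm * Tsel) hq ws0 _ eT E).
  rewrite expR_gt0 /= expR_le1 mulNr oppr_le0; apply: mulr_ge0; last exact: ltW.
  by apply: mulr_ge0; apply: ltW.
have t01p : 0 < tau0 1%N by rewrite t01; apply: addr_gt0.
have Phib : forall m j t, (1 <= m <= M)%N -> j \in Jb -> tau0 m <= t <= tau1 m ->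
    0 <= Phi x j t <= alpha.
  move=> m0 j0 t /andP[m1 mM] hj0 /andP[t1 t2].
  have t0 : tau0 1%N <= t := le_trans (t0mono m0 m1) t1.
  apply/andP; split.
    apply: Phi_ge0 => i; apply: hx0; exact: le_trans (ltW t01p) t0.
  apply: hflux => //; rewrite t0 /=; exact: le_trans t2 (t1mono m0 mM).
have Inb : forall m j, (1 <= m <= M)%N -> j \in Jb ->
    0 <= \int[lebesgue_measure]_(t in `[tau0 m, tau1 m]) Phi x j t <= alpha * Tlearn.
  move=> m0 j0 hm0 hj0.
  have lt01 : tau0 m0 < tau1 m0 by rewrite t1E ltrDl.
  have := @int_bounds R (Phi x j0) (tau0 m0) (tau1 m0) alpha (ltW lt01)
    (@Phi_within R I x j0 `[tau0 m0, tau1 m0] (fun i => hxcm i m0 hm0))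
    (fun t ht => Phib m0 j0 t hm0 hj0 ht).
  by have -> : tau1 m0 - tau0 m0 = Tlearn by rewrite t1E; ring.
have gain0 : forall m j k, (1 <= m <= M)%N -> j \in Jb ->
    0 <= gain x wsel s0 Tsel Tlearn Tren kstar M m j k.
  move=> m0 j0 k0 hm0 hj0.
  have hW := Wb j0 hj0; have hI := Inb m0 j0 hm0 hj0.
  rewrite /gain; cbv zeta.
  move: hW hI; rewrite /tau0 /tau1.
  move: (wsel j0 (T0 Tsel Tlearn Tren 1)) => W.
  move: (\int[lebesgue_measure]_(t in `[T0 Tsel Tlearn Tren m0, T1 Tsel Tlearn Tren m0]) Phi x j0 t) => In.
  move=> hW hI.
  case: eqP => _.
    move: hW hI => /andP[W0 _] /andP[I0 _].
    apply: mulr_ge0; last by apply: divr_ge0.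
    by apply: addr_ge0; apply: mulr_ge0 => //; apply: ltW.
  apply: mulr_ge0; last by rewrite invr_ge0.
  apply: mulr_ge0; last by apply: divr_ge0.
  exact: (@gain_arith R W In q alpha Tlearn s0 hW hI hTl hdelta).
have cgain0 : forall m j k, (m <= M)%N -> j \in Jb ->
    0 <= cgain x wsel s0 Tsel Tlearn Tren kstar M m j k.
  move=> m0 j0 k0 hm0 hj0.
  rewrite /cgain big_nat_cond; apply: sumr_ge0 => i /andP[/andP[i1 i2] _].
  apply: gain0 => //; rewrite i1 /=; move: i2; rewrite ltnS => i2; exact: leq_trans i2 hm0.
have hform : forall m, (1 <= m <= M)%N -> forall j k, j \in Jb ->
    h j k (tau1 m) = h0 * expR (eta * cgain x wsel s0 Tsel Tlearn Tren kstar M m j k).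
  elim=> [//|m0 IH] hm0 j0 k0 hj0.
  have hstart : h j0 k0 (tau0 m0.+1) =
      h0 * expR (eta * cgain x wsel s0 Tsel Tlearn Tren kstar M m0 j0 k0).
    case: m0 IH hm0 => [|m1] IH hm0.
      have [-> _ _ _] := hinit j0 k0 hj0.
      by rewrite /cgain big_geq // mulr0 expR0 mulr1.
    have hm1 : (1 <= m1.+1 <= M)%N.
      by move: hm0 => /andP[_ hh]; rewrite /= ltnW.
    rewrite t0S //.
    have [hc _ _] := hren m1.+1 hm1.
    rewrite (hc j0 k0 (tau2 m1.+1) hj0); first exact: IH.
    by rewrite lexx andbT t2E lerDl ltW.
  have [wc dxk dhk dhk'] := hlearn m0.+1 hm0.
  have lt01 : tau0 m0.+1 < tau1 m0.+1 by rewrite t1E ltrDl.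
  have cPhi := @Phi_within R I x j0 _ (fun i => hxcm i m0.+1 hm0).
  have [_ _ ch _] := hinit j0 k0 hj0.
  have ch' := @within_sub R (h j0 k0) _ _ _ _ (t0mono m0.+1 isT)
     (t1mono m0.+1 (ltac:(by move: hm0 => /andP[]))) ch.
  have cg : cgain x wsel s0 Tsel Tlearn Tren kstar M m0.+1 j0 k0 =
      cgain x wsel s0 Tsel Tlearn Tren kstar M m0 j0 k0 +
      gain x wsel s0 Tsel Tlearn Tren kstar M m0.+1 j0 k0.
    by rewrite /cgain big_nat_recr.
  have tl : tau1 m0.+1 - tau0 m0.+1 = Tlearn by rewrite t1E; ring.
  case: (eqVneq k0 (kstar m0.+1)) => hk.
    rewrite hk in hstart ch' cg *.
    have E := @learn_step R (Phi x j0) (h j0 (kstar m0.+1)) (tau0 m0.+1) (tau1 m0.+1)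
      (drate eta kstar M (kstar m0.+1)) (wsel j0 (tau0 1%N)) s0 lt01 cPhi ch'
      (fun t ht => dhk j0 t hj0 ht).
    rewrite E hstart -mulrA -expRD cg tl; congr (_ * expR _).
    rewrite /gain eqxx; cbv zeta; rewrite /tau0 /tau1 /drate; ring.
  have dh : forall t, tau0 m0.+1 < t < tau1 m0.+1 -> is_derive t 1 (h j0 k0)
      (crate eta kstar M (kstar m0.+1) * (- wsel j0 (tau0 1%N) * Phi x j0 t + s0) * h j0 k0 t).
    move=> t ht; apply: (is_derive_eq (dhk' j0 k0 t hj0 hk ht)).
    rewrite /xj; ring.
  have E := @learn_step R (Phi x j0) (h j0 k0) (tau0 m0.+1) (tau1 m0.+1)
      (crate eta kstar M (kstar m0.+1)) (- wsel j0 (tau0 1%N)) s0 lt01 cPhi ch' dh.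
  rewrite E hstart -mulrA -expRD cg tl; congr (_ * expR _).
  rewrite /gain eq_sym (negbTE hk); cbv zeta; rewrite /tau0 /tau1 /crate invfM; ring.
have SEge : forall m k, (m <= M)%N ->
    #|Jb|%:R <= \sum_(j' in Jb) expR (eta * cgain x wsel s0 Tsel Tlearn Tren kstar M m j' k).
  move=> m0 k0 hm0.
  have -> : (#|Jb|%:R : R) = \sum_(j' in Jb) 1 by rewrite sumr_const.
  apply: ler_sum => j' hj'; rewrite -expR0 ler_expR.
  apply: mulr_ge0; [exact: ltW | exact: cgain0].
have Sform : forall m k, (1 <= m <= M)%N -> \sum_(j' in Jb) h j' k (tau1 m) =
    h0 * \sum_(j' in Jb) expR (eta * cgain x wsel s0 Tsel Tlearn Tren kstar M m j' k).
  move=> m0 k0 hm0; rewrite big_distrr; apply: eq_bigr => j' hj'; exact: hform.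
have Rrel : forall m j k, (1 <= m <= M)%N -> j \in Jb -> exists A S,
    [/\ 0 <= A <= q, h0 * #|Jb|%:R <= S,
        A = ewa x wsel Jb b1 b2 eta s0 Tsel Tlearn Tren kstar M m.+1 j k &
        w j k (tau2 m) - A = (w j k (tau0 m) - A) * expR (- (b2 * S) * Tren)].
  move=> m0 j0 k0 hm0 hj0.
  pose Sx := \sum_(j' in Jb) expR (eta * cgain x wsel s0 Tsel Tlearn Tren kstar M m0 j' k0).
  have hmM : (m0 <= M)%N by move: hm0 => /andP[].
  have hSx : #|Jb|%:R <= Sx := SEge m0 k0 hmM.
  have Jpos : (0 : R) < #|Jb|%:R by rewrite ltr0n.
  have Sxpos : 0 < Sx := lt_le_trans Jpos hSx.
  pose S := \sum_(j' in Jb) h j' k0 (tau1 m0).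
  have SE : S = h0 * Sx := Sform m0 k0 hm0.
  have Spos : 0 < S by rewrite SE; apply: mulr_gt0.
  pose A := b1 * h j0 k0 (tau1 m0) / (b2 * S).
  exists A, S.
  have hpos : forall j', j' \in Jb -> 0 < h j' k0 (tau1 m0).
    by move=> j' hj'; rewrite hform //; apply: mulr_gt0 => //; exact: expR_gt0.
  have hle : h j0 k0 (tau1 m0) <= S.
    rewrite /S (bigD1 j0) //= lerDl; apply: sumr_ge0 => j' /andP[hj' _].
    exact: ltW (hpos j' hj').
  split.
  - have -> : A = q * (h j0 k0 (tau1 m0) / S) by rewrite /A /q; field; rewrite !gt_eqF.
    apply/andP; split.
      by apply: mulr_ge0; [exact: ltW | apply: divr_ge0; apply: ltW => //; exact: hpos].
    by rewrite ger_pMr // ler_pdivrMr // mul1r.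
  - by rewrite SE; apply: ler_wpM2l => //; exact: ltW.
  - rewrite /ewa ifF; last by case: (m0) hm0.
    rewrite /= /A hform // SE /Sx; field.
    by rewrite (gt_eqF Sxpos) (gt_eqF hb2) (gt_eqF hh0).
  have [hc _ dw] := hren m0 hm0.
  have [wc _ _ _] := hlearn m0 hm0.
  have lt12 : tau1 m0 < tau2 m0 by rewrite t2E ltrDl.
  have [_ _ _ cw] := hinit j0 k0 hj0.
  have l1 : tau0 1%N <= tau1 m0.
    apply: (le_trans (t0mono m0 (ltac:(by move: hm0 => /andP[])))).
    by rewrite t1E lerDl ltW.
  have l2 : tau2 m0 <= tau2 M.
    rewrite /tau2 /T2 /T1 lerD2r lerD2r; exact: t0le.
  have cw' := @within_sub R (w j0 k0) _ _ _ _ l1 l2 cw.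
  have dw' : forall t, tau1 m0 < t < tau2 m0 -> is_derive t 1 (w j0 k0) (b2 * S * (A - w j0 k0 t)).
    move=> t ht; apply: (is_derive_eq (dw j0 k0 t hj0 ht)).
    rewrite /A /S; field.
    by rewrite (gt_eqF Spos) (gt_eqF hb2).
  have E := @renorm_step R (w j0 k0) (tau1 m0) (tau2 m0) (b2 * S) A lt12 cw' dw'.
  rewrite E -(wc j0 k0 (tau1 m0) hj0); last by rewrite lexx andbT t1E lerDl ltW.
  congr (_ * expR (_ * _)); rewrite t2E; ring.
have e_le1 : forall S, h0 * #|Jb|%:R <= S -> 0 < expR (- (b2 * S) * Tren) <= 1.
  move=> S hS; rewrite expR_gt0 /= expR_le1 mulNr oppr_le0.
  apply: mulr_ge0; last exact: ltW.
  apply: mulr_ge0; first exact: ltW.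
  apply: le_trans hS; apply: mulr_ge0; [exact: ltW | exact: ler0n].
have wbound : forall m, (1 <= m <= M)%N -> forall j k, j \in Jb -> 0 <= w j k (tau0 m) <= q.
  elim=> [//|m0 IH] hm0 j0 k0 hj0.
  case: m0 IH hm0 => [|m1] IH hm0.
    have [_ -> _ _] := hinit j0 k0 hj0.
    rewrite invfM mulrA; apply: div_le => //.
    by rewrite ler1n.
  have hm1 : (1 <= m1.+1 <= M)%N.
    by move: hm0 => /andP[_ hh]; rewrite /= ltnW.
  rewrite t0S //.
  have [A [S [hA hS _ E]]] := Rrel m1.+1 j0 k0 hm1 hj0.
  exact: (@conv_arith R q A _ _ _ hA (IH hm1 j0 k0 hj0) (e_le1 S hS) E).
have [A [S [hA hS hAe E]]] := Rrel m j k hm hj.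
rewrite -hAe.
apply: (@final_arith R q A _ _ _ _ hA (wbound m hm j k hj) _ E).
have /andP[e0 _] := e_le1 S hS.
rewrite e0 /=.
exact: (@exp_cmp R b2 h0 #|Jb|%:R S Tren hb2 (ltW hTren) hS).
Qed.
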